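(* Let $\mathcal{F}$ be the set of all non-increasing functions $f:[0,1]\to\mathbb{R}$. Then $\mathsf{dis}(\mathcal{F}) \le 2$.
   Context: For a measurable space $\mathcal{X}$ and a class $\mathcal{F}$ of measurable functions $\mathcal{X}\to\mathbb{R}$, the disagreement coefficient is $$\mathsf{dis}(\mathcal{F}) = \sup_{\varepsilon,\delta>0}\ \sup_{\nu\in\Delta(\mathcal{X})} \frac{\delta^2}{\varepsilon^2}\,\mathbb{P}_{p\sim\nu}\Big(\exists f\in\mathcal{F}:\ \mathbb{E}_{q\sim\nu}[f(q)^2]\le\varepsilon^2\ \text{and}\ |f(p)|>\delta\Big),$$ where $\Delta(\mathcal{X})$ is the set of probability measures on $\mathcal{X}$. *)

(* Defs.v *)
From HB Require Import structures.
From mathcomp Require Import all_boot all_order all_algebra.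
From mathcomp Require Import all_classical all_reals all_analysis.
Set Implicit Arguments. Unset Strict Implicit. Unset Printing Implicit Defensive.
Import Order.TTheory GRing.Theory Num.Theory.
Local Open Scope classical_set_scope.
Local Open Scope ring_scope.

(* The measurable space X is a (Borel) measurable subset D of R; a
   probability measure on X is a probability measure nu on R with nu D = 1;
   functions X -> R are represented by functions R -> R whose values outside D
   are irrelevant. *)

Definition dis_event (R : realType) (D : set R) (F : set (R -> R))
    (nu : probability R R) (eps delta : R) : set R :=
  [set p | D p /\ exists f, F f /\
      (\int[nu]_(q in D) ((f q) ^+ 2)%:E <= (eps ^+ 2)%:E)%E /\ delta < `|f p|].

Definition dis (R : realType) (D : set R) (F : set (R -> R)) : \bar R :=
  ereal_sup [set r | exists (eps delta : R) (nu : probability R R),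
      [/\ 0 < eps, 0 < delta, nu D = 1%E &
       r = ((delta ^+ 2 / eps ^+ 2)%:E * nu (dis_event D F nu eps delta))%E]].

Definition nonincreasing01 (R : realType) : set (R -> R) :=
  [set f | forall x y, x \in `[0, 1] -> y \in `[0, 1] -> x <= y -> f y <= f x].

(* Main.v *)
Require Import Defs.
From HB Require Import structures.
From mathcomp Require Import all_boot all_order all_algebra.
From mathcomp Require Import all_classical all_reals all_analysis.
From mathcomp Require Import ring lra.
From mathcomp Require Import measurable_realfun.
Import Order.TTheory GRing.Theory Num.Theory.
Local Open Scope classical_set_scope.
Local Open Scope ring_scope.

Lemma mf01 (R : realType) (f : R -> R) : nonincreasing01 f ->
  measurable_fun `[(0:R), 1] f.
Proof.
move=> hf.
pose c x : R := Num.min 1 (Num.max 0 x).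
have c01 x : c x \in `[(0:R), 1].
  by rewrite in_itv /= /c le_min ler01 le_max lexx ge_min lexx.
have cx x : x \in `[(0:R), 1] -> c x = x.
  by rewrite in_itv /= => /andP[x0 x1]; rewrite /c (max_r x0) (min_r x1).
apply: (eq_measurable_fun (f \o c)).
  by move=> x; rewrite inE /= => xD; rewrite cx.
apply: measurable_realfun.nonincreasing_measurable => // x y xy /=.
apply: hf => //.
by rewrite /c le_min2 // le_max2.
Qed.

Lemma K (R : realType) (nu : probability R R) (f : R -> R) (A : set R) (delta : R) :
  nonincreasing01 f -> measurable A -> A `<=` `[(0:R),1] -> 0 <= delta ->
  (forall x, A x -> delta < `|f x|) ->
  ((delta^+2)%:E * nu A <= \int[nu]_(q in `[0%R, 1%R]) ((f q) ^+ 2)%:E)%E.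
Proof.
move=> hf mA AD d0 hA.
have -> : ((delta^+2)%:E * nu A = \int[nu]_(x in `[0%R, 1%R]) (delta^+2 * \1_A x)%:E)%E.
  rewrite (integralZl_indic _ (fun=> A)) //=; last by move=> h; exfalso; move: h; rewrite ltNge sqr_ge0.
  by rewrite integral_indic // setIidl.
apply: ge0_le_integral => //.
- by move=> x _; rewrite lee_fin mulr_ge0 // ?sqr_ge0 // indicE; case: (x \in A).
- apply/measurable_EFinP; apply: measurable_funM => //; exact: measurable_indic.
- apply/measurable_EFinP; apply: measurable_funX; exact: mf01.
move=> x Dx; rewrite lee_fin indicE.
case: (boolP (x \in A)) => xA.
  have := hA x (set_mem xA); rewrite mulr1 -(real_normK (num_real (f x))) => h.
  have := normr_ge0 (f x); nra.
by rewrite mulr0 sqr_ge0.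
Qed.
Lemma L1 (R : realType) (mu : {measure set R -> \bar R}) (S : set R) (t : \bar R) :
  measurable S -> has_sup S ->
  (forall p, S p -> (mu (S `&` `]-oo, p]) <= t)%E) -> (mu S <= t)%E.
Proof.
move=> mS hs hb; set s := sup S.
have ub : forall x, S x -> x <= s by move=> x Sx; exact: sup_upper_bound.
have [Ss|Ss] := pselect (S s).
  have -> : S = S `&` `]-oo, s].
    apply/seteqP; split => x; last by case.
    by move=> Sx; split => //; rewrite /= in_itv /= ub.
  exact: hb.
pose F n := S `&` `]-oo, s - n.+1%:R^-1].
have mF n : measurable (F n) by apply: measurableI.
have SE : S = \bigcup_n F n.
  apply/seteqP; split => [x Sx|x [n _ [Sx _]]] //.
  have xs : x < s by rewrite lt_neqAle ub // andbT; apply/eqP => xs; apply: Ss; rewrite -xs.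
  have [k hk] := ltr_add_invr xs.
  exists k => //; split => //; rewrite /= in_itv /= lerBrDr ltW //.
have ndF : nondecreasing_seq F.
  move=> m n mn; apply/subsetPset => x [Sx]; rewrite /= !in_itv /= => h; split => //.
  rewrite /= in_itv /=; apply: (le_trans h); rewrite lerB //.
  by rewrite lef_pV2 ?posrE // ler_nat.
have mU : measurable (\bigcup_n F n) by rewrite -SE.
have := nondecreasing_cvg_mu (mu:=mu) mF mU ndF.
rewrite -SE => cv; rewrite -(cvg_lim _ cv) //.
apply: lime_le; first by apply/cvg_ex; eexists; exact: cv.
near=> n => /=.
have e0 : 0 < n.+1%:R^-1 :> R by rewrite invr_gt0.
have [p Sp hp] := sup_adherent e0 hs.
apply: le_trans (hb p Sp); apply: le_measure; rewrite ?inE //; first exact: measurableI.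
move=> x [Sx]; rewrite /= !in_itv /= => h; split => //; rewrite /= ?in_itv /=.
by rewrite (le_trans h) // ltW.
Unshelve. all: by end_near.
Qed.

Lemma L2 (R : realType) (mu : {measure set R -> \bar R}) (S : set R) (t : \bar R) :
  measurable S -> has_inf S ->
  (forall p, S p -> (mu (S `&` `[p, +oo[) <= t)%E) -> (mu S <= t)%E.
Proof.
move=> mS hs hb; set s := inf S.
have ub : forall x, S x -> s <= x by move=> x Sx; exact: (ge_inf hs.2).
have [Ss|Ss] := pselect (S s).
  have -> : S = S `&` `[s, +oo[.
    apply/seteqP; split => x; last by case.
    by move=> Sx; split => //; rewrite /= in_itv /= ub.
  exact: hb.
pose F n := S `&` `[s + n.+1%:R^-1, +oo[.
have mF n : measurable (F n) by apply: measurableI.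
have SE : S = \bigcup_n F n.
  apply/seteqP; split => [x Sx|x [n _ [Sx _]]] //.
  have xs : s < x by rewrite lt_neqAle ub // andbT; apply/eqP => xs; apply: Ss; rewrite xs.
  have [k hk] := ltr_add_invr xs.
  exists k => //; split => //; rewrite /= in_itv /= ltW //.
have ndF : nondecreasing_seq F.
  move=> m n mn; apply/subsetPset => x [Sx]; rewrite /= !in_itv /= => h; split => //.
  rewrite /= in_itv /= andbT; move: h; rewrite andbT; apply: le_trans; rewrite lerD2l.
  by rewrite lef_pV2 ?posrE // ler_nat.
have mU : measurable (\bigcup_n F n) by rewrite -SE.
have := nondecreasing_cvg_mu (mu:=mu) mF mU ndF.
rewrite -SE => cv; rewrite -(cvg_lim _ cv) //.
apply: lime_le; first by apply/cvg_ex; eexists; exact: cv.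
near=> n => /=.
have e0 : 0 < n.+1%:R^-1 :> R by rewrite invr_gt0.
have [p Sp hp] := inf_adherent e0 hs.
apply: le_trans (hb p Sp); apply: le_measure; rewrite ?inE //; first exact: measurableI.
move=> x [Sx]; rewrite /= !in_itv /= => h; split => //; rewrite /= ?in_itv /=.
by rewrite andbT; move: h; rewrite andbT; apply: le_trans; exact: ltW.
Unshelve. all: by end_near.
Qed.

Lemma H (R : realType) (c e : R) (x : \bar R) : 0 < c ->
  (c%:E * x <= e%:E)%E -> (x <= (e / c)%:E)%E.
Proof.
move=> c0; case: x => [r||] //=.
  by rewrite -EFinM !lee_fin ler_pdivlMr // mulrC.
  by rewrite gt0_muley ?lte_fin.
by rewrite leNye.
Qed.

Theorem mainTheorem3 (R : realType) :
  Order.le (dis `[(0:R), 1]%classic (@nonincreasing01 R)) (2%:E).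
Proof.
rewrite /dis; apply: ge_ereal_sup => r [eps [delta [nu [e0 d0 nuD ->]]]].
set D := `[(0:R), 1]%classic.
set t := eps^+2 / delta^+2.
have t0 : 0 <= t by rewrite divr_ge0 // sqr_ge0.
pose I f := (\int[nu]_(q in D) ((f q) ^+ 2)%:E <= (eps ^+ 2)%:E)%E.
pose E1 := [set p | D p /\ exists f, nonincreasing01 f /\ I f /\ delta < f p].
pose E2 := [set p | D p /\ exists f, nonincreasing01 f /\ I f /\ delta < - f p].
have EE : dis_event D (@nonincreasing01 R) nu eps delta = E1 `|` E2.
  apply/seteqP; split => p.
    move=> [Dp [f [Ff [hi hp]]]]; move: hp; rewrite ltr_normr => /orP[h|h].
      by left; split => //; exists f.
    by right; split => //; exists f.
  case => -[Dp [f [Ff [hi hp]]]]; split => //; exists f; split => //; split => //;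
    by rewrite ltr_normr hp ?orbT.
have key : forall f A, nonincreasing01 f -> I f -> measurable A -> A `<=` D ->
    (forall x, A x -> delta < `|f x|) -> (nu A <= t%:E)%E.
  move=> f A Ff If mA AD hA; apply: H; first by rewrite exprn_gt0.
  exact: le_trans (K _ _ _ _ _ Ff mA AD (ltW d0) hA) If.
have E1D : E1 `<=` D by move=> x [].
have E2D : E2 `<=` D by move=> x [].
have mE1 : measurable E1.
  apply: is_interval_measurable => x y [Dx _] [Dy [f [Ff [If hy]]]] z /andP[xz zy].
  have Dz : D z.
    move: Dx Dy; rewrite /D /= !in_itv /= => /andP[x0 _] /andP[_ y1].
    by rewrite (le_trans x0 xz) (le_trans zy y1).
  split => //; exists f; split => //; split => //.
  by apply: lt_le_trans hy _; apply: Ff => //; rewrite inE.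
have mE2 : measurable E2.
  apply: is_interval_measurable => x y [Dx [f [Ff [If hx]]]] [Dy _] z /andP[xz zy].
  have Dz : D z.
    move: Dx Dy; rewrite /D /= !in_itv /= => /andP[x0 _] /andP[_ y1].
    by rewrite (le_trans x0 xz) (le_trans zy y1).
  split => //; exists f; split => //; split => //.
  by apply: lt_le_trans hx _; rewrite lerN2; apply: Ff => //; rewrite inE.
have b1 : (nu E1 <= t%:E)%E.
  have [[p0 Ep0]|E0] := pselect (E1 !=set0); last first.
    have -> : E1 = set0.
      by apply/seteqP; split => x // Ex; exfalso; apply: E0; exists x.
    by rewrite measure0 lee_fin.
  apply: L1 => //.
    split; first by exists p0.
    by exists 1 => x /E1D; rewrite /D /= in_itv /= => /andP[].
  move=> p [Dp [f [Ff [If hp]]]].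
  apply: (key f) => //; first exact: measurableI.
    by move=> x [/E1D].
  move=> x [/E1D Dx]; rewrite /= in_itv /= => xp.
  apply: (lt_le_trans hp); apply: (le_trans _ (ler_norm _)).
  by apply: Ff => //; rewrite inE.
have b2 : (nu E2 <= t%:E)%E.
  have [[p0 Ep0]|E0] := pselect (E2 !=set0); last first.
    have -> : E2 = set0.
      by apply/seteqP; split => x // Ex; exfalso; apply: E0; exists x.
    by rewrite measure0 lee_fin.
  apply: L2 => //.
    split; first by exists p0.
    by exists 0 => x /E2D; rewrite /D /= in_itv /= => /andP[].
  move=> p [Dp [f [Ff [If hp]]]].
  apply: (key f) => //; first exact: measurableI.
    by move=> x [/E2D].
  move=> x [/E2D Dx]; rewrite /= in_itv /= andbT => px.
  apply: (lt_le_trans hp); rewrite -normrN; apply: (le_trans _ (ler_norm _)).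
  rewrite lerN2; by apply: Ff => //; rewrite inE.
rewrite EE.
apply: (le_trans (lee_wpmul2l _ (le_trans (measureU2 nu mE1 mE2) (leeD b1 b2)))).
  by rewrite lee_fin divr_ge0 // sqr_ge0.
rewrite -EFinD -EFinM lee_fin /t le_eqVlt; apply/orP; left; apply/eqP.
field; apply/andP; split; rewrite ?expf_neq0 // ?gt_eqF //.
Qed.
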